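(* Let $q>0$, let $S\subset\mathbb{H}^3$ be a sphere of hyperbolic radius $q$ centred at $p\in\mathbb{H}^3$, let $n\geq2$ and let $u_1,\dots,u_n\in T_p\mathbb{H}^3$ be unit vectors. Let $p_i$ be the intersection point of $S$ with $\mathrm{geod}(p,u_i)(\mathbb R_+)$. For each $i$ let $S_i\subset\mathbb{H}^3$ be the sphere of hyperbolic radius $q$ such that $S\cap S_i=\{p_i\}$, and let $\theta_{ij}$ be the angle between $u_i$ and $u_j$. If for all $i\neq j$ $$\theta_{ij}>2\arcsin\left(\frac{1}{2\cosh q}\right),$$ then $S_i\cap S_j=\emptyset$ for all $i\neq j$.
   Context: For $p\in\mathbb{H}^3$ and a unit vector $v\in T_p\mathbb{H}^3$, $\mathrm{geod}(p,v)$ denotes the unit-speed geodesic through $p$ with initial velocity $v$. *)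

(* Defs.v *)
(* hyperbolic 3-space in the hyperboloid model in R^{1,3}. *)
From Stdlib Require Import Reals.
Open Scope R_scope.

Record V4 := mkV4 { c0 : R; c1 : R; c2 : R; c3 : R }.

Definition mink (a b : V4) : R :=
  - c0 a * c0 b + c1 a * c1 b + c2 a * c2 b + c3 a * c3 b.

Definition in_H3 (x : V4) : Prop := mink x x = -1 /\ 0 < c0 x.

Definition arcosh (y : R) : R := ln (y + sqrt (y * y - 1)).

Definition hdist (x y : V4) : R := arcosh (- mink x y).

Definition tangent_at (p v : V4) : Prop := mink p v = 0.
Definition unit_vec (v : V4) : Prop := mink v v = 1.

Definition geod (p v : V4) (t : R) : V4 :=
  mkV4 (cosh t * c0 p + sinh t * c0 v) (cosh t * c1 p + sinh t * c1 v)
       (cosh t * c2 p + sinh t * c2 v) (cosh t * c3 p + sinh t * c3 v).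

Definition angle (u w : V4) : R :=
  acos (mink u w / (sqrt (mink u u) * sqrt (mink w w))).

Definition sphere (c : V4) (r : R) (x : V4) : Prop := in_H3 x /\ hdist c x = r.

(* Main.v *)
Require Import Defs.
From Stdlib Require Import Reals.
Open Scope R_scope.
From Stdlib Require Import Lra Psatz.
Require Import Defs.

Lemma exp_inv_mul t : exp t * exp (- t) = 1.
Proof. rewrite <- exp_plus, Rplus_opp_r; apply exp_0. Qed.

Lemma hyp1 t : cosh t * cosh t - sinh t * sinh t = 1.
Proof. unfold cosh, sinh. pose proof (exp_inv_mul t). nra. Qed.

Lemma cosh_pos t : 0 < cosh t.
Proof. unfold cosh. pose proof (exp_pos t); pose proof (exp_pos (-t)). lra. Qed.

Lemma sinh_nonneg t : 0 <= t -> 0 <= sinh t.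
Proof. intros [H|H]. - rewrite <- sinh_0; left; apply sinh_lt; auto. - subst; rewrite sinh_0; lra. Qed.

Lemma sinh_pos t : 0 < t -> 0 < sinh t.
Proof. intros H. rewrite <- sinh_0; apply sinh_lt; auto. Qed.

Lemma arcosh_cosh t : 0 <= t -> arcosh (cosh t) = t.
Proof.
  intros Ht. unfold arcosh.
  replace (cosh t * cosh t - 1) with (sinh t * sinh t) by (pose proof (hyp1 t); lra).
  rewrite sqrt_square by (apply sinh_nonneg; auto).
  replace (cosh t + sinh t) with (exp t) by (unfold cosh, sinh; field).
  apply ln_exp.
Qed.

Lemma cosh_arcosh y : 1 <= y -> cosh (arcosh y) = y.
Proof.
  intros Hy. unfold arcosh.
  set (r := sqrt (y * y - 1)).
  assert (Hr : r * r = y * y - 1) by (apply sqrt_sqrt; nra).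
  assert (Hr0 : 0 <= r) by apply sqrt_pos.
  assert (Hs : 0 < y + r) by lra.
  unfold cosh. rewrite exp_ln by auto.
  assert (E : exp (- ln (y + r)) = y - r).
  { pose proof (exp_inv_mul (ln (y + r))) as E. rewrite exp_ln in E by auto.
    apply Rmult_eq_reg_l with (y + r); [|lra]. rewrite E. nra. }
  rewrite E. field.
Qed.
Require Import Defs.

Definition lin (a : R) (x : V4) (b : R) (y : V4) : V4 :=
  mkV4 (a * c0 x + b * c0 y) (a * c1 x + b * c1 y) (a * c2 x + b * c2 y) (a * c3 x + b * c3 y).

Lemma mink_sym x y : mink x y = mink y x.
Proof. unfold mink; ring. Qed.

Lemma mink_lin_l a x b y z : mink (lin a x b y) z = a * mink x z + b * mink y z.
Proof. unfold mink, lin; simpl; ring. Qed.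

Lemma mink_lin_r a x b y z : mink z (lin a x b y) = a * mink z x + b * mink z y.
Proof. unfold mink, lin; simpl; ring. Qed.

Lemma rev_cs x y : in_H3 x -> in_H3 y -> 1 <= - mink x y.
Proof.
  destruct x as [x0 x1 x2 x3], y as [y0 y1 y2 y3]; unfold in_H3, mink; simpl.
  intros [Hx Hx0] [Hy Hy0].
  set (a := x1*x1+x2*x2+x3*x3). set (b := y1*y1+y2*y2+y3*y3). set (d := x1*y1+x2*y2+x3*y3).
  assert (L : d * d <= a * b).
  { assert (a*b - d*d = (x1*y2-x2*y1)*(x1*y2-x2*y1) + (x1*y3-x3*y1)*(x1*y3-x3*y1) + (x2*y3-x3*y2)*(x2*y3-x3*y2)) by (unfold a,b,d; ring).
    pose proof (Rle_0_sqr (x1*y2-x2*y1)); pose proof (Rle_0_sqr (x1*y3-x3*y1)); pose proof (Rle_0_sqr (x2*y3-x3*y2)); unfold Rsqr in *; lra. }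
  assert (L2 : 2 * d <= a + b).
  { unfold a, b, d. pose proof (Rle_0_sqr (x1-y1)); pose proof (Rle_0_sqr (x2-y2)); pose proof (Rle_0_sqr (x3-y3)); unfold Rsqr in *; lra. }
  assert (Ea : x0 * x0 = 1 + a) by (unfold a; lra).
  assert (Eb : y0 * y0 = 1 + b) by (unfold b; lra).
  assert (P : 0 < x0 * y0) by nra.
  assert (Q : (1 + d) * (1 + d) <= (x0 * y0) * (x0 * y0)) by nra.
  assert (x0 * y0 >= 1 + d) by nra.
  unfold d in *; lra.
Qed.

Lemma spacelike x w : mink x x = -1 -> mink x w = 0 ->
  0 <= mink w w /\ (mink w w = 0 -> c0 w = 0 /\ c1 w = 0 /\ c2 w = 0 /\ c3 w = 0).
Proof.
  destruct x as [x0 x1 x2 x3], w as [w0 w1 w2 w3]; unfold mink; simpl.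
  intros Hx Hw.
  set (a := x1*x1+x2*x2+x3*x3). set (B := w1*w1+w2*w2+w3*w3). set (d := x1*w1+x2*w2+x3*w3).
  assert (L : d * d <= a * B).
  { assert (a*B - d*d = (x1*w2-x2*w1)*(x1*w2-x2*w1) + (x1*w3-x3*w1)*(x1*w3-x3*w1) + (x2*w3-x3*w2)*(x2*w3-x3*w2)) by (unfold a,B,d; ring).
    pose proof (Rle_0_sqr (x1*w2-x2*w1)); pose proof (Rle_0_sqr (x1*w3-x3*w1)); pose proof (Rle_0_sqr (x2*w3-x3*w2)); unfold Rsqr in *; lra. }
  assert (Ea : x0 * x0 = 1 + a) by (unfold a; lra).
  assert (Ed : x0 * w0 = d) by (unfold d; lra).
  assert (a0 : 0 <= a) by (unfold a; pose proof (Rle_0_sqr x1); pose proof (Rle_0_sqr x2); pose proof (Rle_0_sqr x3); unfold Rsqr in *; lra).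
  assert (K : w0 * w0 * (1 + a) <= a * B).
  { rewrite <- Ea. replace (w0*w0*(x0*x0)) with (d*d) by (rewrite <- Ed; ring). auto. }
  assert (B0 : 0 <= B) by (unfold B; pose proof (Rle_0_sqr w1); pose proof (Rle_0_sqr w2); pose proof (Rle_0_sqr w3); unfold Rsqr in *; lra).
  assert (W0 : 0 <= w0 * w0) by nra.
  assert (M : w0 * w0 <= B).
  { destruct (Rle_or_lt (w0*w0) B) as [|HB]; auto.
    assert (a * B <= a * (w0*w0)) by (apply Rmult_le_compat_l; lra). nra. }
  split.
  - unfold B in M; lra.
  - intros E. assert (w0 * w0 = B) by (unfold B; lra).
    assert (w0 * w0 <= 0) by nra.
    assert (w0 = 0) by nra. subst w0.
    assert (Bz : B = 0) by lra. unfold B in Bz.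
    pose proof (Rle_0_sqr w1); pose proof (Rle_0_sqr w2); pose proof (Rle_0_sqr w3); unfold Rsqr in *.
    repeat split; nra.
Qed.

Lemma upper x y : mink x x = -1 -> in_H3 y -> 0 < - mink x y -> 0 < c0 x.
Proof.
  destruct x as [x0 x1 x2 x3], y as [y0 y1 y2 y3]; unfold in_H3, mink; simpl.
  intros Hx [Hy Hy0] H.
  set (a := x1*x1+x2*x2+x3*x3). set (b := y1*y1+y2*y2+y3*y3). set (d := x1*y1+x2*y2+x3*y3).
  assert (L : d * d <= a * b).
  { assert (a*b - d*d = (x1*y2-x2*y1)*(x1*y2-x2*y1) + (x1*y3-x3*y1)*(x1*y3-x3*y1) + (x2*y3-x3*y2)*(x2*y3-x3*y2)) by (unfold a,b,d; ring).
    pose proof (Rle_0_sqr (x1*y2-x2*y1)); pose proof (Rle_0_sqr (x1*y3-x3*y1)); pose proof (Rle_0_sqr (x2*y3-x3*y2)); unfold Rsqr in *; lra. }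
  assert (Ea : x0 * x0 = 1 + a) by (unfold a; lra).
  assert (Eb : y0 * y0 = 1 + b) by (unfold b; lra).
  assert (a0 : 0 <= a) by (unfold a; pose proof (Rle_0_sqr x1); pose proof (Rle_0_sqr x2); pose proof (Rle_0_sqr x3); unfold Rsqr in *; lra).
  assert (b0 : 0 <= b) by (unfold b; pose proof (Rle_0_sqr y1); pose proof (Rle_0_sqr y2); pose proof (Rle_0_sqr y3); unfold Rsqr in *; lra).
  assert (Hd : d < x0 * y0) by (unfold d; lra).
  destruct (Rlt_or_le 0 x0) as [|Hn]; auto.
  exfalso.
  assert (x0 * y0 <= 0) by nra.
  assert ((x0*y0)*(x0*y0) = (1+a)*(1+b)) by (rewrite <- Ea, <- Eb; ring).
  nra.
Qed.

Lemma sphere_iff c q x : in_H3 c -> 0 <= q ->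
  (sphere c q x <-> in_H3 x /\ - mink c x = cosh q).
Proof.
  intros Hc Hq; unfold sphere, hdist; split.
  - intros [Hx Hd]; split; auto.
    pose proof (rev_cs c x Hc Hx).
    rewrite <- Hd. symmetry; apply cosh_arcosh; auto.
  - intros [Hx Hd]; split; auto. rewrite Hd; apply arcosh_cosh; auto.
Qed.

Lemma sphere_from c q x p : in_H3 c -> 0 <= q -> in_H3 p -> mink x x = -1 ->
  0 < - mink x p -> - mink c x = cosh q -> sphere c q x.
Proof.
  intros Hc Hq Hp Hxx Hxp Hcx. apply sphere_iff; auto.
  split; [split; auto|auto]. eapply upper; eauto.
Qed.

Lemma scal C S a l : C*C - S*S = 1 -> 0 < S -> 0 < C -> 1 <= a -> l <> 0 ->
  a*a - l*l = 1 -> a*C - l*S = C -> a = C*C+S*S /\ l = 2*C*S.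
Proof.
  intros H1 HS HC Ha Hl H2 H3.
  assert (E1 : S * l = C * (a - 1)) by lra.
  assert (E2 : S*S*(a*a-1) = C*C*((a-1)*(a-1))).
  { replace (a*a-1) with (l*l) by lra. replace (S*S*(l*l)) with ((S*l)*(S*l)) by ring. rewrite E1; ring. }
  assert (Ha1 : a - 1 <> 0).
  { intro Z. assert (l*l = 0) by nra. apply Hl. nra. }
  assert (E3 : S*S*(a+1) = C*C*(a-1)).
  { apply Rmult_eq_reg_r with (a-1); auto. rewrite Rmult_assoc, (Rmult_assoc (C*C)).
    replace ((a+1)*(a-1)) with (a*a-1) by ring. rewrite E2; ring. }
  assert (Ea : a = C*C+S*S) by nra.
  split; auto.
  apply Rmult_eq_reg_l with S; [|lra]. rewrite E1, Ea. nra.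
Qed.

Ltac mexp := repeat (rewrite ?mink_lin_l, ?mink_lin_r).
Lemma center q p u c : 0 < q -> in_H3 p -> mink p u = 0 -> mink u u = 1 -> in_H3 c ->
  (forall x, sphere p q x /\ sphere c q x <-> x = lin (cosh q) p (sinh q) u) ->
  c = lin (cosh q * cosh q + sinh q * sinh q) p (2 * cosh q * sinh q) u.
Proof.
  intros Hq Hp Hpu Huu Hc Hiff.
  pose proof (hyp1 q) as HCS. pose proof (sinh_pos q Hq) as HS. pose proof (cosh_pos q) as HC.
  set (C := cosh q) in *. set (S := sinh q) in *.
  assert (Hpp : mink p p = -1) by (destruct Hp; auto).
  assert (Hup : mink u p = 0) by (rewrite mink_sym; auto).
  set (P := lin C p S u).
  destruct (proj2 (Hiff P) eq_refl) as [_ HP2].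
  apply sphere_iff in HP2; [|auto|lra]. destruct HP2 as [_ HcP].
  unfold P in HcP. rewrite mink_lin_r in HcP. fold C in HcP.
  set (al := - mink c p).
  set (w := lin 1 c (mink c p) p).
  assert (Hcz : forall z, mink c z = mink w z + al * mink p z).
  { intro z. unfold w, al. mexp. ring. }
  assert (Hpw : mink p w = 0).
  { unfold w. mexp. rewrite (mink_sym p c), Hpp. ring. }
  destruct (spacelike p w Hpp Hpw) as [HN HN0].
  set (be := mink u w).
  assert (Hcu : mink c u = be) by (rewrite Hcz, Hpu, mink_sym; unfold be; ring).

  rewrite Hcu in HcP.
  assert (Hal : 1 <= al) by (unfold al; rewrite mink_sym; apply rev_cs; auto).
  destruct (Req_dec (mink w w) 0) as [HN'|HN'].
  -
    destruct (HN0 HN') as (W0 & W1 & W2 & W3).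
    assert (Hbe : be = 0) by (unfold be, mink; rewrite W0, W1, W2, W3; ring).
    set (x' := lin C p (-S) u).
    assert (Hxx : mink x' x' = -1).
    { unfold x'; mexp. rewrite Hpp, Hpu, Hup, Huu. nra. }
    assert (Hxp : 0 < - mink x' p).
    { unfold x'; mexp. rewrite Hpp, Hup. nra. }
    assert (Hx1 : sphere p q x').
    { apply (sphere_from p q x' p); auto; try lra.
      unfold x'; mexp. rewrite Hpp, Hpu. fold C. ring. }
    assert (Hx2 : sphere c q x').
    { apply (sphere_from c q x' p); auto; try lra.
      unfold x'; mexp. rewrite Hcu, Hbe. fold C. rewrite Hbe in HcP. unfold al in HcP. nra. }
    pose proof (proj1 (Hiff x') (conj Hx1 Hx2)) as E.
    unfold x', lin in E. injection E; intros E3 E2 E1 E0.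
    exfalso.
    assert (u0 : c0 u = 0) by nra. assert (u1 : c1 u = 0) by nra.
    assert (u2 : c2 u = 0) by nra. assert (u3 : c3 u = 0) by nra.
    unfold mink in Huu; rewrite u0, u1, u2, u3 in Huu; lra.
  - set (N := mink w w) in *.
    assert (HNp : 0 < N) by lra.
    set (v := lin (2*be/N) w (-1) u).
    assert (Hwu : mink w u = be) by (unfold be; apply mink_sym).
    assert (Hpv : mink p v = 0) by (unfold v; mexp; rewrite Hpw, Hpu; ring).
    assert (Hvv : mink v v = 1).
    { unfold v; mexp. rewrite Hwu, Huu. fold N. fold be. field. lra. }
    assert (Hvp : mink v p = 0) by (rewrite mink_sym; auto).
    assert (Hcv : mink c v = be).
    { rewrite Hcz, Hpv. unfold v; mexp. fold N. rewrite Hwu. field. lra. }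
    set (x' := lin C p S v).
    assert (Hxx : mink x' x' = -1).
    { unfold x'; mexp. rewrite Hpp, Hpv, Hvp, Hvv. nra. }
    assert (Hxp : 0 < - mink x' p).
    { unfold x'; mexp. rewrite Hpp, Hvp. nra. }
    assert (Hx1 : sphere p q x').
    { apply (sphere_from p q x' p); auto; try lra.
      unfold x'; mexp. rewrite Hpp, Hpv. fold C. ring. }
    assert (Hx2 : sphere c q x').
    { apply (sphere_from c q x' p); auto; try lra.
      unfold x'; mexp. rewrite Hcv. fold C. unfold al in HcP. nra. }
    pose proof (proj1 (Hiff x') (conj Hx1 Hx2)) as E.
    unfold x', v, lin in E. simpl in E. injection E; intros E3 E2 E1 E0.
    assert (K : forall a b a', C * a + S * (2 * be / N * b + -1 * a') = C * a + S * a' -> be * b = N * a').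
    { intros a b a' H. assert (H' : S*(2*be/N*b + -1*a') = S*a') by lra.
      replace (be*b) with (N/(2*S) * (S*(2*be/N*b + -1*a') + S*a')) by (field; lra).
      rewrite H'. field. lra. }
    apply K in E0, E1, E2, E3.
    assert (Hbe : be <> 0).
    { intro Z. rewrite Z in E0, E1, E2, E3.
      assert (c0 u = 0) by nra. assert (c1 u = 0) by nra.
      assert (c2 u = 0) by nra. assert (c3 u = 0) by nra.
      unfold mink in Huu. nra. }
    set (la := N / be).
    assert (F : forall a b a', be * (1 * a + mink c p * b) = N * a' -> a = al * b + la * a').
    { intros a b a' H. unfold la. replace (N/be*a') with ((N*a')/be) by (field; auto).
      rewrite <- H. unfold al. field. auto. }
    apply F in E0, E1, E2, E3.
    assert (Ec : c = lin al p la u).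
    { transitivity (mkV4 (c0 c) (c1 c) (c2 c) (c3 c)); [destruct c; reflexivity|].
      unfold lin. rewrite E0, E1, E2, E3. reflexivity. }
    assert (Hcc : mink c c = -1) by (destruct Hc; auto).
    rewrite Ec in Hcc. rewrite ?mink_lin_l, ?mink_lin_r in Hcc. rewrite Hpp, Hpu, Hup, Huu in Hcc.
    assert (Hla : la <> 0).
    { unfold la. intro Z. apply Rmult_integral in Z. destruct Z as [Z|Z]; [lra|].
      apply Rinv_neq_0_compat in Hbe. auto. }
    assert (HcP' : al * C - la * S = C).
    { rewrite Ec in Hcu. rewrite ?mink_lin_l, ?mink_lin_r in Hcu. rewrite Hpu, Huu in Hcu. rewrite <- Hcu in HcP. unfold al in *. lra. }
    destruct (scal C S al la) as [A1 A2]; auto; try lra.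
    rewrite Ec, A1, A2. reflexivity.
Qed.

Lemma angle_bound m C : 1 <= C -> -1 <= m <= 1 ->
  acos m > 2 * asin (1 / (2 * C)) -> m * (2 * C * C) < 2 * C * C - 1.
Proof.
  intros HC Hm H.
  set (s := 1 / (2 * C)).
  assert (Hs : 0 < s <= 1/2).
  { unfold s; split. apply Rdiv_lt_0_compat; lra.
    apply Rmult_le_reg_r with (2*C); [lra|]. unfold Rdiv. field_simplify; lra. }
  pose proof (asin_bound s) as Ba. pose proof (acos_bound m) as Bc. pose proof PI_RGT_0.
  assert (Ss : sin (asin s) = s) by (apply sin_asin; lra).
  assert (Ha0 : 0 <= asin s).
  { destruct (Rle_or_lt 0 (asin s)) as [|Hl]; auto.
    assert (sin (asin s) < 0) by (apply sin_lt_0_var; lra). lra. }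
  assert (Hlt : cos (acos m) < cos (2 * asin s)).
  { apply cos_decreasing_1; try lra. fold s in H. lra. }
  rewrite cos_acos in Hlt by lra. rewrite cos_2a_sin, Ss in Hlt.
  assert (E : s * s * (2 * C * C) = 1/2) by (unfold s; field; lra).
  nra.
Qed.

Lemma t_eq_q q t : 0 <= q -> 0 <= t -> cosh t = cosh q -> t = q.
Proof.
  intros Hq Ht E. rewrite <- (arcosh_cosh t Ht), <- (arcosh_cosh q Hq), E. reflexivity.
Qed.

Theorem lemma9 (q : R) (p : V4) (n : nat) (u : nat -> V4)
  (pt : nat -> V4) (c : nat -> V4) :
  0 < q -> in_H3 p -> (2 <= n)%nat ->
  (forall i, (i < n)%nat -> tangent_at p (u i) /\ unit_vec (u i)) ->
  (forall i, (i < n)%nat ->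
     sphere p q (pt i) /\ exists t, 0 <= t /\ pt i = geod p (u i) t) ->
  (forall i, (i < n)%nat ->
     in_H3 (c i) /\
     (forall x, (sphere p q x /\ sphere (c i) q x) <-> x = pt i)) ->
  (forall i j, (i < n)%nat -> (j < n)%nat -> i <> j ->
     angle (u i) (u j) > 2 * asin (1 / (2 * cosh q))) ->
  forall i j, (i < n)%nat -> (j < n)%nat -> i <> j ->
    forall x, ~ (sphere (c i) q x /\ sphere (c j) q x).
Proof.
  intros Hq Hp Hn Hu Hpt Hc Hang i j Hi Hj Hij x [Hxi Hxj].
  pose proof (hyp1 q) as HCS. pose proof (sinh_pos q Hq) as HS. pose proof (cosh_pos q) as HC.
  assert (Hpp : mink p p = -1) by (destruct Hp; auto).
  assert (Ecen : forall k, (k < n)%nat ->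
     c k = lin (cosh q * cosh q + sinh q * sinh q) p (2 * cosh q * sinh q) (u k)).
  { intros k Hk. destruct (Hu k Hk) as [Hpu Huu]. destruct (Hpt k Hk) as [Hs [t [Ht Et]]].
    destruct (Hc k Hk) as [Hck Hiff].
    assert (Ept : pt k = lin (cosh q) p (sinh q) (u k)).
    { rewrite Et. change (geod p (u k) t) with (lin (cosh t) p (sinh t) (u k)) in *.
      apply sphere_iff in Hs; [|auto|lra]. destruct Hs as [_ Hs].
      rewrite Et in Hs. rewrite mink_lin_r in Hs. unfold tangent_at in Hpu. rewrite Hpp, Hpu in Hs.
      assert (t = q) by (apply t_eq_q; lra). subst t; reflexivity. }
    apply center; auto. intro y. rewrite <- Ept. apply Hiff. }
  destruct (Hu i Hi) as [Hpui Huui]. destruct (Hu j Hj) as [Hpuj Huuj].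
  unfold tangent_at, unit_vec in *.
  set (C := cosh q) in *. set (S := sinh q) in *.
  apply sphere_iff in Hxi; [|apply Hc; auto|lra]. destruct Hxi as [Hx Hxi].
  apply sphere_iff in Hxj; [|apply Hc; auto|lra]. destruct Hxj as [_ Hxj].
  fold C in Hxi, Hxj.
  assert (Hxx : mink x x = -1) by (destruct Hx; auto).
  set (a := lin 1 (c i) 1 (c j)).
  set (w := lin 1 a (mink x a) x).
  assert (Hxw : mink x w = 0).
  { unfold w; mexp. rewrite Hxx. ring. }
  destruct (spacelike x w Hxx Hxw) as [Hww _].
  assert (Hxa : mink x a = - 2 * C).
  { unfold a; mexp. rewrite (mink_sym x (c i)), (mink_sym x (c j)). lra. }
  set (m := mink (u i) (u j)).
  assert (Haa : mink a a = -2 + 2 * (- (C*C+S*S)*(C*C+S*S) + (2*C*S)*(2*C*S)*m)).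
  { unfold a. rewrite (Ecen i Hi), (Ecen j Hj). mexp.
    rewrite Hpp, Hpui, Hpuj, Huui, Huuj, (mink_sym (u i) p), (mink_sym (u j) p), Hpui, Hpuj,
      (mink_sym (u j) (u i)). fold m. nra. }
  assert (Hwwe : mink w w = mink a a + mink x a * mink x a).
  { unfold w; mexp. rewrite Hxx, (mink_sym a x). ring. }
  assert (Hm1 : m <= 1).
  { destruct (spacelike p (lin 1 (u i) (-1) (u j)) Hpp) as [H _].
    mexp. rewrite Hpui, Hpuj. ring.
    revert H. mexp. rewrite Huui, Huuj, (mink_sym (u j) (u i)). fold m. lra. }
  assert (Hm2 : -1 <= m).
  { destruct (spacelike p (lin 1 (u i) 1 (u j)) Hpp) as [H _].
    mexp. rewrite Hpui, Hpuj. ring.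
    revert H. mexp. rewrite Huui, Huuj, (mink_sym (u j) (u i)). fold m. lra. }
  pose proof (Hang i j Hi Hj Hij) as Ha. unfold angle in Ha.
  rewrite Huui, Huuj, sqrt_1 in Ha. fold m in Ha.
  replace (m / (1 * 1)) with m in Ha by field.
  assert (HC1 : 1 <= C) by nra.
  pose proof (angle_bound m C HC1 (conj Hm2 Hm1) Ha) as Hb.
  rewrite Hwwe, Haa, Hxa in Hww.
  assert (HS2 : 0 < 4 * S * S) by nra.
  assert (K : (4*S*S) * (m * (2*C*C)) < (4*S*S) * (2*C*C - 1)) by (apply Rmult_lt_compat_l; auto).
  nra.
Qed.
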